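(* Let $(\mathcal{S},\mathcal{A},P,r)$ be a weakly communicating MDP with finite state and action spaces ($S,A$ their sizes) and $r\in[0,1]$; fix $\delta\in(0,1)$. For integers $i\ge1$ let $n_i=2^i$, let $\widehat P^{(i)}$ be a transition kernel, $\mathcal{H}_i=\{\gamma:\frac1{1-\gamma}=2^k\text{ for an integer }k,\ \sqrt{n_i}\le\frac1{1-\gamma}\le n_i\}$, and for each $\gamma\in\mathcal{H}_i$ let $\widetilde\pi_{\gamma,i}$ be a policy and $\widetilde V_{\gamma,i}\in\mathbb{R}^{\mathcal{S}}$. Suppose that for all $i\ge1$ and all $\gamma\in\mathcal{H}_i$: $\|V^{\pi^\star_\gamma}_\gamma-\widehat V^{\pi^\star_\gamma}_{\gamma,i}\|_\infty\le\frac{\alpha(\delta,n_i)}{1-\gamma}\sqrt{\frac{\|V^{\pi^\star_\gamma}_\gamma\|_{\mathrm{sp}}+1}{n_i}}$; $\widehat V^{\widetilde\pi_{\gamma,i}}_{\gamma,i}\ge\widehat V^\star_{\gamma,i}-\frac1{n_i}\mathbf 1$; $\|\widetilde V_{\gamma,i}-\widehat V^\star_{\gamma,i}\|_\infty\le\frac1{n_i}$; and $\|\widehat V^{\widetilde\pi_{\gamma,i}}_{\gamma,i}-V^{\widetilde\pi_{\gamma,i}}_\gamma\|_\infty\le\frac{\alpha(\delta,n_i)}{1-\gamma}\sqrt{\frac{\|\widehat V^{\widetilde\pi_{\gamma,i}}_{\gamma,i}\|_{\mathrm{sp}}+1}{n_i}}$. Define $$\widehat U_i(\gamma)=(1-\gamma)\max_s\widetilde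 V_{\gamma,i}(s)+5\frac{1-\gamma}{n_i}+\frac{2\alpha(\delta,n_i)^2}{(1-\gamma)n_i}+4\alpha(\delta,n_i)\sqrt{\frac{\|\widetilde V_{\gamma,i}\|_{\mathrm{sp}}+1+\frac3{n_i}}{n_i}},$$ $$\widehat L_i(\gamma)=(1-\gamma)\min_s\widetilde V_{\gamma,i}(s)-2\frac{1-\gamma}{n_i}-\alpha(\delta,n_i)\sqrt{\frac{\|\widetilde V_{\gamma,i}\|_{\mathrm{sp}}+\frac3{n_i}+1}{n_i}}.$$ Then for all integers $i\ge1$ and all $\gamma\in\mathcal{H}_i$, $\widehat L_i(\gamma)\mathbf 1\le\rho^{\widetilde\pi_{\gamma,i}}\le\rho^\star\le\widehat U_i(\gamma)\mathbf 1$.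
   Context: $V^\pi_\gamma,V^\star_\gamma$: discounted value of $\pi$ and optimal value in $(P,r,\gamma)$, $\pi^\star_\gamma$ an optimal policy; $\widehat V^\pi_{\gamma,i},\widehat V^\star_{\gamma,i}$: same in $(\widehat P^{(i)},r,\gamma)$. Gain $\rho^\pi(s)=\lim_T\frac1T\mathbb{E}^\pi_s[\sum_{t<T}r(S_t,A_t)]$, $\rho^\star=\sup_\pi\rho^\pi$. $\|x\|_{\mathrm{sp}}=\max x-\min x$. $\alpha(\tilde\delta,\tilde n)=96\sqrt{\log(24SA\tilde n^5/\tilde\delta)}\log_2(\log_2(\tilde n+4))$. Weakly communicating: states split into a set transient under every stationary policy and a communicating set. *)

(* Defs.v *)
From HB Require Import structures.
From mathcomp Require Import all_boot all_order all_algebra.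
From mathcomp Require Import all_classical all_reals all_analysis.
Set Implicit Arguments. Unset Strict Implicit. Unset Printing Implicit Defensive.
Import Order.TTheory GRing.Theory Num.Theory.
Import numFieldNormedType.Exports.
Local Open Scope classical_set_scope.
Local Open Scope ring_scope.

Section MDP.
Variables (R : realType) (S A : finType).

Definition is_kernel (P : S -> A -> S -> R) :=
  forall s a, (forall s', 0 <= P s a s') /\ \sum_(s' : S) P s a s' = 1.

(* general (history-dependent, randomized) policy:
   pi h s a = probability of action a in current state s after history h *)
Definition policy := seq (S * A) -> S -> A -> R.
Definition is_policy (pi : policy) :=
  forall h s, (forall a, 0 <= pi h s a) /\ \sum_(a : A) pi h s a = 1.

Definition stat (p : S -> A -> R) : policy := fun _ s a => p s a.
Definition is_stat_policy (p : S -> A -> R) :=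
  forall s, (forall a, 0 <= p s a) /\ \sum_(a : A) p s a = 1.

(* E^pi_s [ sum_{t<T} g^t r(S_t,A_t) ], the history being h *)
Fixpoint ret (P : S -> A -> S -> R) (r : S -> A -> R) (g : R) (pi : policy)
    (T : nat) (h : seq (S * A)) (s : S) : R :=
  match T with
  | 0 => 0
  | T'.+1 => \sum_(a : A) pi h s a *
       (r s a + g * \sum_(s' : S) P s a s' * ret P r g pi T' (rcons h (s, a)) s')
  end.

Definition Vpi P r (g : R) (pi : policy) (s : S) : R :=
  limn (fun T => ret P r g pi T [::] s).

Definition Vstar P r (g : R) (s : S) : R :=
  sup [set Vpi P r g pi s | pi in is_policy].

(* gain rho^pi(s) = lim_T (1/T) E[sum_{t<T} r]; taken as limsup so that it is
   defined for every policy (it is a genuine limit for stationary policies) *)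
Definition gain P r (pi : policy) (s : S) : R :=
  limn_sup (fun T => (T%:R)^-1 * ret P r 1 pi T [::] s).

Definition rhostar P r (s : S) : R :=
  sup [set gain P r pi s | pi in is_policy].

Definition supnorm (x : S -> R) : R := \big[Num.max/0]_(s : S) `|x s|.
Definition vmax (x : S -> R) : R := sup (range x).
Definition vmin (x : S -> R) : R := inf (range x).
Definition spnorm (x : S -> R) : R := vmax x - vmin x.

(* weakly communicating, w.r.t. deterministic stationary policies d : S -> A *)
Fixpoint nstep (P : S -> A -> S -> R) (d : S -> A) (n : nat) (s s' : S) : R :=
  match n with
  | 0 => (s == s')%:R
  | n'.+1 => \sum_(y : S) P s (d s) y * nstep P d n' y s'
  end.
Definition accessible P d (s s' : S) := exists n, 0 < nstep P d n s s'.

(* probability, starting from x, of visiting s at some time in 1..n *)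
Fixpoint hitp (P : S -> A -> S -> R) (d : S -> A) (s : S) (n : nat) (x : S) : R :=
  match n with
  | 0 => 0
  | n'.+1 => P x (d x) s + \sum_(y : S | y != s) P x (d x) y * hitp P d s n' y
  end.
Definition transient P d (s : S) := limn (fun n => hitp P d s n s) < 1.

Definition weakly_communicating (P : S -> A -> S -> R) :=
  exists C : {set S},
    (forall s s', s \in C -> s' \in C -> exists d, accessible P d s s') /\
    (forall s, s \notin C -> forall d, transient P d s).

End MDP.

Definition log2 {R : realType} (x : R) : R := ln x / ln 2.

Definition alpha {R : realType} (nS nA : nat) (delta n : R) : R :=
  96 * Num.sqrt (ln (24 * nS%:R * nA%:R * n ^+ 5 / delta)) * log2 (log2 (n + 4)).

Definition Hset {R : realType} (i : nat) (g : R) :=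
  exists k : nat, (1 - g)^-1 = 2 ^+ k /\
    Num.sqrt (2 ^+ i : R) <= 2 ^+ k /\ (2 ^+ k : R) <= 2 ^+ i.

(* Main.v *)
Require Import Defs.
From HB Require Import structures.
From mathcomp Require Import all_boot all_order all_algebra.
From mathcomp Require Import all_classical all_reals all_analysis.
From mathcomp Require Import ring lra.
Set Implicit Arguments. Unset Strict Implicit. Unset Printing Implicit Defensive.
Import Order.TTheory GRing.Theory Num.Theory.
Import numFieldNormedType.Exports.
Local Open Scope classical_set_scope.
Local Open Scope ring_scope.

Section RetLemmas.
Variables (R : realType) (S A : finType) (P : S -> A -> S -> R) (r : S -> A -> R).
Hypothesis hP : is_kernel P.
Hypothesis hr : forall s a, 0 <= r s a <= 1.

Lemma sumP_cst s a (c : R) : \sum_(s' : S) P s a s' * c = c.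
Proof. by rewrite -mulr_suml (proj2 (hP s a)) mul1r. Qed.

Lemma sumpi_cst (pi : policy R S A) h s (c : R) : is_policy pi ->
  \sum_(a : A) pi h s a * c = c.
Proof. by move=> hpi; rewrite -mulr_suml (proj2 (hpi h s)) mul1r. Qed.

Lemma ret_ge0 g pi T h s : 0 <= g -> is_policy pi -> 0 <= ret P r g pi T h s.
Proof.
move=> g0 hpi; elim: T h s => [|T IH] h s /=; first by [].
apply: sumr_ge0 => a _; apply: mulr_ge0; first exact: (proj1 (hpi h s)).
apply: addr_ge0; first by case/andP: (hr s a).
apply: mulr_ge0 => //; apply: sumr_ge0 => s' _; apply: mulr_ge0 => //.
exact: (proj1 (hP s a)).
Qed.

Lemma ret_le g pi T h s : 0 <= g < 1 -> is_policy pi ->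
  ret P r g pi T h s <= (1 - g)^-1.
Proof.
move=> /andP[g0 g1] hpi; have hB : 0 < 1 - g by rewrite subr_gt0.
elim: T h s => [|T IH] h s /=; first by rewrite invr_ge0 ltW.
apply: (@le_trans _ _ (\sum_(a : A) pi h s a * (1 + g * \sum_(s' : S) P s a s' * (1 - g)^-1))).
  apply: ler_sum => a _; apply: ler_wpM2l; first exact: (proj1 (hpi h s)).
  apply: lerD; first by case/andP: (hr s a).
  apply: ler_wpM2l => //; apply: ler_sum => s' _; apply: ler_wpM2l => //.
  exact: (proj1 (hP s a)).
under eq_bigr do rewrite sumP_cst.
rewrite sumpi_cst //.
have -> : 1 + g * (1 - g)^-1 = (1 - g)^-1.
  by field; rewrite subr_eq0 eq_sym lt_eqF.
by [].
Qed.

Lemma ret_nd g pi T h s : 0 <= g -> is_policy pi ->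
  ret P r g pi T h s <= ret P r g pi T.+1 h s.
Proof.
move=> g0 hpi; elim: T h s => [|T IH] h s.
  by rewrite [X in X <= _]/=; apply: ret_ge0.
rewrite [X in X <= _]/= [X in _ <= X]/=.
apply: ler_sum => a _; apply: ler_wpM2l; first exact: (proj1 (hpi h s)).
rewrite lerD2l; apply: ler_wpM2l => //; apply: ler_sum => s' _.
apply: ler_wpM2l; first exact: (proj1 (hP s a)).
exact: IH.
Qed.

Lemma ret_cvg g pi h s : 0 <= g < 1 -> is_policy pi ->
  cvgn (fun T => ret P r g pi T h s).
Proof.
move=> hg hpi; apply: nondecreasing_is_cvgn.
  by apply/nondecreasing_seqP => T; apply: ret_nd => //; case/andP: hg.
by exists (1 - g)^-1 => _ [T _ <-]; apply: ret_le.
Qed.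

Lemma Vpi_le g pi s : 0 <= g < 1 -> is_policy pi -> Vpi P r g pi s <= (1 - g)^-1.
Proof.
move=> hg hpi; apply: limr_le; first exact: ret_cvg.
by apply: nearW => T; apply: ret_le.
Qed.

Lemma Vpi_ge0 g pi s : 0 <= g < 1 -> is_policy pi -> 0 <= Vpi P r g pi s.
Proof.
move=> hg hpi; apply: limr_ge; first exact: ret_cvg.
by apply: nearW => T; apply: ret_ge0 => //; case/andP: hg.
Qed.

Lemma Vstar_ge g pi s : 0 <= g < 1 -> is_policy pi -> Vpi P r g pi s <= Vstar P r g s.
Proof.
move=> hg hpi; apply: ub_le_sup; last by exists pi.
by exists (1 - g)^-1 => _ [p hp <-]; apply: Vpi_le.
Qed.

End RetLemmas.


Section Ret2.
Variables (R : realType) (S A : finType) (P : S -> A -> S -> R) (r : S -> A -> R).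
Hypothesis hP : is_kernel P.
Hypothesis hr : forall s a, 0 <= r s a <= 1.

Lemma stat_policy (p : S -> A -> R) : is_stat_policy p -> is_policy (stat p).
Proof. by move=> hp h s; apply: hp. Qed.

Lemma ret_stat (p : S -> A -> R) g T h s :
  ret P r g (stat p) T h s = ret P r g (stat p) T [::] s.
Proof.
elim: T h s => [|T IH] h s //=.
apply: eq_bigr => a _; congr (_ * (_ + _ * _)); apply: eq_bigr => s' _.
by rewrite IH (IH (rcons [::] (s, a))).
Qed.

Lemma ret_ext (pi1 pi2 : policy R S A) g :
  (forall h, h != [::] -> pi1 h = pi2 h) ->
  forall T h s, h != [::] -> ret P r g pi1 T h s = ret P r g pi2 T h s.
Proof.
move=> e; elim=> [|T IH] h s hn //=.
rewrite e //; apply: eq_bigr => a _; congr (_ * (_ + _ * _)); apply: eq_bigr => s' _.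
by rewrite IH //; case: (h).
Qed.

Lemma cvgn_lim (u : R^nat) : cvgn u -> u @ \oo --> limn u.
Proof. by []. Qed.

Lemma cvg_step (p : S -> A -> R) g s a : 0 <= g < 1 -> is_stat_policy p ->
  (fun T => r s a + g * \sum_(s' : S) P s a s' * ret P r g (stat p) T [::] s') @ \oo
   --> r s a + g * \sum_(s' : S) P s a s' * Vpi P r g (stat p) s'.
Proof.
move=> hg hp.
apply: cvgD; first exact: cvg_cst.
apply: cvgMl_tmp.
apply: (@cvg_big _ _ +%R 0 xpredT add_continuous) => // s' _.
apply: cvgMl_tmp.
apply: cvgn_lim; apply: ret_cvg => //; exact: stat_policy.
Qed.

Lemma Vpi_stat_eq (p : S -> A -> R) g s : 0 <= g < 1 -> is_stat_policy p ->
  Vpi P r g (stat p) s =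
  \sum_(a : A) p s a * (r s a + g * \sum_(s' : S) P s a s' * Vpi P r g (stat p) s').
Proof.
move=> hg hp; apply: cvg_lim => //.
rewrite -cvg_shiftS /=.
have -> : (fun n => ret P r g (stat p) n.+1 [::] s) =
  (fun n => \sum_(a : A) p s a * (r s a + g * \sum_(s' : S) P s a s' * ret P r g (stat p) n [::] s')).
  apply: funext => n /=; apply: eq_bigr => a _; congr (_ * (_ + _ * _)).
  by apply: eq_bigr => s' _; rewrite ret_stat.
apply: (@cvg_big _ _ +%R 0 xpredT add_continuous) => // a _.
by apply: cvgMl_tmp; apply: cvg_step.
Qed.

Definition devpol (p : S -> A -> R) (a : A) : policy R S A :=
  fun h s' a' => if h is [::] then (a' == a)%:R else p s' a'.

Lemma devpol_policy p a : is_stat_policy p -> is_policy (devpol p a).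
Proof.
move=> hp [|x h] s /=; last exact: hp.
split=> [a'|]; first by rewrite ler0n.
rewrite (bigD1 a) //= eqxx big1 ?addr0 // => a' ha.
by rewrite (negbTE ha).
Qed.

Lemma Vstar_dev (p : S -> A -> R) g s a : 0 <= g < 1 -> is_stat_policy p ->
  r s a + g * \sum_(s' : S) P s a s' * Vpi P r g (stat p) s' <= Vstar P r g s.
Proof.
move=> hg hp.
have <- : Vpi P r g (devpol p a) s = r s a + g * \sum_(s' : S) P s a s' * Vpi P r g (stat p) s'.
  apply: cvg_lim => //; rewrite -cvg_shiftS /=.
  have -> : (fun n => ret P r g (devpol p a) n.+1 [::] s) =
     (fun T => r s a + g * \sum_(s' : S) P s a s' * ret P r g (stat p) T [::] s').
    apply: funext => n /=.
    rewrite (bigD1 a) //= eqxx mul1r [X in _ + X]big1 ?addr0; last first.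
      by move=> a' ha; rewrite (negbTE ha) mul0r.
    congr (_ + _ * _); apply: eq_bigr => s' _.
    rewrite (@ret_ext (devpol p a) (stat p)) //; first by rewrite ret_stat.
    by move=> [|x h'].
  exact: cvg_step.
apply: Vstar_ge => //; exact: devpol_policy.
Qed.

End Ret2.


Section Limsup.
Variable R : realType.

Lemma bnd01 (u : R^nat) : (forall n, 0 <= u n <= 1) -> bounded_fun u.
Proof.
move=> hu; exists 1; split; first exact: num_real.
move=> M hM x _ /=; have /andP[h0 h1] := hu x.
by rewrite ger0_norm // (le_trans h1) // ltW.
Qed.

Lemma big_N (d e : R) : 0 < e -> exists N : nat, (0 < N)%N /\ d / N%:R < e.
Proof.
move=> e0; have [N hN] : exists N : nat, d / e < N%:R.
  by eexists; apply: truncnS_gt.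
exists N.+1; split => //.
have N0 : (0 : R) < N.+1%:R by rewrite ltr0Sn.
rewrite ltr_pdivrMr // mulrC -ltr_pdivrMr //.
by rewrite (lt_le_trans hN) // ler_nat.
Qed.

Lemma div_mono (d : R) (m N : nat) : 0 <= d -> (0 < N)%N -> (N <= m)%N ->
  d / m%:R <= d / N%:R.
Proof.
move=> d0 N0 Nm; apply: ler_wpM2l => //.
rewrite lef_pV2 ?ler_nat // posrE ltr0n //; exact: leq_trans Nm.
Qed.

Lemma limsup_le (u : R^nat) c d : (forall n, 0 <= u n <= 1) -> 0 <= d ->
  (forall n, (0 < n)%N -> u n <= c + d / n%:R) -> limn_sup u <= c.
Proof.
move=> hu d0 hb; have bu := bnd01 hu.
rewrite limn_supE //; apply/ler_addgt0Pr => e e0.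
have [N [N0 hN]] := big_N d e0.
apply: (@le_trans _ _ (sups u N)).
  by apply: ge_inf; [exact: bounded_fun_has_lbound_sups | exists N].
apply: ge_sup; first by exists (u N); exists N => /=.
move=> _ [m /= hm <-]; apply: (le_trans (hb m (leq_trans N0 hm))).
rewrite lerD2l (le_trans (div_mono d0 N0 hm)) // ltW //.
Qed.

Lemma limsup_ge (u : R^nat) c d : (forall n, 0 <= u n <= 1) -> 0 <= d ->
  (forall n, (0 < n)%N -> c - d / n%:R <= u n) -> c <= limn_sup u.
Proof.
move=> hu d0 hb; have bu := bnd01 hu.
rewrite limn_supE //; apply/ler_addgt0Pr => e e0; rewrite -lerBlDr.
have [N [N0 hN]] := big_N d e0.
apply: lb_le_inf; first by exists (sups u 0); exists 0%N.
move=> _ [n _ <-]; rewrite /sups /=.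
have hm : (N <= maxn n N)%N by rewrite leq_maxr.
apply: (@le_trans _ _ (u (maxn n N))); last first.
  apply: ub_le_sup; first exact/has_ubound_sdrop/bounded_fun_has_ubound.
  by exists (maxn n N) => //=; rewrite /= leq_maxl.
apply: (le_trans _ (hb _ (leq_trans N0 hm))).
rewrite lerB // (le_trans (div_mono d0 N0 hm)) // ltW //.
Qed.

End Limsup.


Section Gain.
Variables (R : realType) (S A : finType) (P : S -> A -> S -> R) (r : S -> A -> R).
Hypothesis hP : is_kernel P.
Hypothesis hr : forall s a, 0 <= r s a <= 1.

Lemma ret1_le (pi : policy R S A) T h s : is_policy pi -> ret P r 1 pi T h s <= T%:R.
Proof.
move=> hpi; elim: T h s => [|T IH] h s /=; first by [].
apply: (@le_trans _ _ (\sum_(a : A) pi h s a * (1 + \sum_(s' : S) P s a s' * T%:R))).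
  apply: ler_sum => a _; apply: ler_wpM2l; first exact: (proj1 (hpi h s)).
  rewrite mul1r; apply: lerD; first by case/andP: (hr s a).
  apply: ler_sum => s' _; apply: ler_wpM2l; [exact: (proj1 (hP s a)) | exact: IH].
under eq_bigr do rewrite (sumP_cst hP).
by rewrite (sumpi_cst _ _ _ hpi) -natr1 addrC.
Qed.

Lemma avg01 (pi : policy R S A) s : is_policy pi ->
  forall n, 0 <= n%:R^-1 * ret P r 1 pi n [::] s <= 1.
Proof.
move=> hpi [|n]; first by rewrite /= mulr0 lexx ler01.
have n0 : (0 : R) < n.+1%:R by rewrite ltr0Sn.
apply/andP; split; first by rewrite mulr_ge0 ?invr_ge0 ?ler0n //; apply: (ret_ge0 hP hr).
by rewrite mulrC ler_pdivrMr // mul1r ret1_le.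
Qed.

Lemma sumPD s a (W : S -> R) c :
  \sum_(s' : S) P s a s' * (W s' + c) = \sum_(s' : S) P s a s' * W s' + c.
Proof.
under eq_bigr do rewrite mulrDr.
by rewrite big_split /= (sumP_cst hP).
Qed.

Lemma sumP_le s a (W : S -> R) M : (forall s, W s <= M) ->
  \sum_(s' : S) P s a s' * W s' <= M.
Proof.
move=> hM; rewrite -[leRHS](sumP_cst hP s a).
apply: ler_sum => s' _; apply: ler_wpM2l; [exact: (proj1 (hP s a)) | exact: hM].
Qed.

Lemma sumP_ge s a (W : S -> R) m : (forall s, m <= W s) ->
  m <= \sum_(s' : S) P s a s' * W s'.
Proof.
move=> hm; rewrite -[leLHS](sumP_cst hP s a).
apply: ler_sum => s' _; apply: ler_wpM2l; [exact: (proj1 (hP s a)) | exact: hm].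
Qed.

Lemma ret1_upper (pi : policy R S A) (W : S -> R) g M m :
  0 <= g <= 1 -> (forall s, m <= W s <= M) ->
  (forall s a, r s a + g * \sum_(s' : S) P s a s' * W s' <= W s) ->
  is_policy pi ->
  forall T h s, ret P r 1 pi T h s <= W s - m + T%:R * ((1 - g) * M).
Proof.
move=> /andP[g0 g1] hW hB hpi; elim=> [|T IH] h s /=.
  by rewrite mul0r addr0 subr_ge0; case/andP: (hW s).
set K := - m + T%:R * ((1 - g) * M).
apply: (@le_trans _ _ (\sum_(a : A) pi h s a * (W s + (1 - g) * M + K))).
  apply: ler_sum => a _; apply: ler_wpM2l; first exact: (proj1 (hpi h s)).
  rewrite mul1r.
  have h1 : \sum_(s' : S) P s a s' * ret P r 1 pi T (rcons h (s, a)) s' <=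
            \sum_(s' : S) P s a s' * (W s' + K).
    apply: ler_sum => s' _; apply: ler_wpM2l; first exact: (proj1 (hP s a)).
    by rewrite /K addrA; apply: IH.
  rewrite sumPD in h1.
  have h2 := sumP_le s a (fun s => proj2 (andP (hW s))).
  have h3 := hB s a.
  have h4 : (1 - g) * \sum_(s' : S) P s a s' * W s' <= (1 - g) * M.
    by apply: ler_wpM2l => //; rewrite subr_ge0.
  set X := \sum_(s' : S) P s a s' * W s' in h1 h2 h3 h4 *.
  set Y := \sum_(s' : S) P s a s' * _ in h1 *.
  have e : r s a + X = r s a + g * X + (1 - g) * X by ring.
  lra.
rewrite (sumpi_cst _ _ _ hpi) /K -natr1; lra.
Qed.

Lemma ret1_lower (p : S -> A -> R) (W : S -> R) g M m :
  0 <= g <= 1 -> (forall s, m <= W s <= M) ->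
  (forall s, W s = \sum_(a : A) p s a * (r s a + g * \sum_(s' : S) P s a s' * W s')) ->
  is_stat_policy p ->
  forall T h s, W s - M + T%:R * ((1 - g) * m) <= ret P r 1 (stat p) T h s.
Proof.
move=> /andP[g0 g1] hW hB hp; have hpi : is_policy (stat p) by move=> h s; apply: hp.
elim=> [|T IH] h s /=.
  by rewrite mul0r addr0 subr_le0; case/andP: (hW s).
set K := - M + T%:R * ((1 - g) * m).
apply: (@le_trans _ _ (\sum_(a : A) p s a * (r s a + g * \sum_(s' : S) P s a s' * W s' + (1 - g) * m + K))).
  have -> : \sum_(a : A) p s a * (r s a + g * \sum_(s' : S) P s a s' * W s' + (1 - g) * m + K)
     = W s + ((1 - g) * m + K).
    under eq_bigr do rewrite -addrA mulrDr.
    by rewrite big_split /= -hB (sumpi_cst _ _ _ hpi).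
  rewrite /K -natr1; lra.
apply: ler_sum => a _; apply: ler_wpM2l; first exact: (proj1 (hp s)).
rewrite mul1r.
have h1 : \sum_(s' : S) P s a s' * (W s' + K) <=
          \sum_(s' : S) P s a s' * ret P r 1 (stat p) T (rcons h (s, a)) s'.
  apply: ler_sum => s' _; apply: ler_wpM2l; first exact: (proj1 (hP s a)).
  by rewrite /K addrA; apply: IH.
rewrite sumPD in h1.
have h2 := sumP_ge s a (fun s => proj1 (andP (hW s))).
have h4 : (1 - g) * m <= (1 - g) * \sum_(s' : S) P s a s' * W s'.
  by apply: ler_wpM2l => //; rewrite subr_ge0.
set X := \sum_(s' : S) P s a s' * W s' in h1 h2 h4 *.
set Y := \sum_(s' : S) P s a s' * _ in h1 *.
have e : r s a + X = r s a + g * X + (1 - g) * X by ring.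
lra.
Qed.

Lemma gain_upper (pi : policy R S A) (W : S -> R) g M m s :
  0 <= g <= 1 -> (forall s, m <= W s <= M) ->
  (forall s a, r s a + g * \sum_(s' : S) P s a s' * W s' <= W s) ->
  is_policy pi -> gain P r pi s <= (1 - g) * M.
Proof.
move=> hg hW hB hpi.
have mM : m <= M by case/andP: (hW s) => h1 h2; apply: le_trans h1 h2.
apply: (@limsup_le _ _ _ (M - m) (avg01 s hpi)); first by rewrite subr_ge0.
move=> n n0; have nR : (0 : R) < n%:R by rewrite ltr0n.
have := ret1_upper hg hW hB hpi n [::] s.
have [h1 h2] := andP (hW s).
set Z := ret _ _ _ _ _ _ _ => hZ.
rewrite mulrC ler_pdivrMr //. rewrite mulrDl divfK ?gt_eqF //.
rewrite mulrC in hZ. lra.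
Qed.

Lemma gain_lower (p : S -> A -> R) (W : S -> R) g M m s :
  0 <= g <= 1 -> (forall s, m <= W s <= M) ->
  (forall s, W s = \sum_(a : A) p s a * (r s a + g * \sum_(s' : S) P s a s' * W s')) ->
  is_stat_policy p -> (1 - g) * m <= gain P r (stat p) s.
Proof.
move=> hg hW hB hp; have hpi : is_policy (stat p) by move=> h s'; apply: hp.
have mM : m <= M by case/andP: (hW s) => h1 h2; apply: le_trans h1 h2.
apply: (@limsup_ge _ _ _ (M - m) (avg01 s hpi)); first by rewrite subr_ge0.
move=> n n0; have nR : (0 : R) < n%:R by rewrite ltr0n.
have := ret1_lower hg hW hB hp n [::] s.
have [h1 h2] := andP (hW s).
set Z := ret _ _ _ _ _ _ _ => hZ.
rewrite [_^-1 * Z]mulrC ler_pdivlMr // mulrBl divfK ?gt_eqF //.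
rewrite mulrC in hZ. lra.
Qed.

End Gain.


Section Vec.
Variables (R : realType) (S : finType).
Implicit Types x : S -> R.

Lemma supnorm_ge x s : `|x s| <= supnorm x.
Proof. by rewrite /supnorm (bigD1 s) //= le_max lexx. Qed.

Lemma supnorm_abs x e s : supnorm x <= e -> `|x s| <= e.
Proof. by move=> h; apply: le_trans h; apply: supnorm_ge. Qed.

Lemma vmax_ge x s : x s <= vmax x.
Proof.
apply: ub_le_sup; last by exists s.
exists (supnorm x) => _ [t _ <-]; exact: le_trans (ler_norm _) (supnorm_ge x t).
Qed.

Lemma vmax_le x B (s0 : S) : (forall s, x s <= B) -> vmax x <= B.
Proof. by move=> h; apply: ge_sup; [exists (x s0), s0 | move=> _ [t _ <-]]. Qed.

Lemma vmin_le x s : vmin x <= x s.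
Proof.
apply: ge_inf; last by exists s.
exists (- supnorm x) => _ [t _ <-]; rewrite lerNl.
apply: le_trans (supnorm_ge x t); by rewrite -normrN ler_norm.
Qed.

Lemma vmin_ge x B (s0 : S) : (forall s, B <= x s) -> B <= vmin x.
Proof. by move=> h; apply: lb_le_inf; [exists (x s0), s0 | move=> _ [t _ <-]]. Qed.

End Vec.

Lemma key_ineq (R : realType) (y b q Z X : R) :
  0 <= y -> 0 <= b -> 0 <= q -> (0 <= Z -> y ^+ 2 = q * Z) -> b ^+ 2 = q * X ->
  (Z < 0 -> y = 0) -> Z <= X + y + b -> y <= q + b.
Proof.
move=> y0 b0 q0 hy hb hZ hZX.
have [Zn|Zp] := ltP Z 0; first by rewrite hZ // addr_ge0.
have e := hy Zp.
have h1 : y ^+ 2 <= b ^+ 2 + q * y + q * b.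
  by rewrite e hb; have := ler_wpM2l q0 hZX; lra.
have h2 : (y - q - b) * (y + b) <= 0.
  have -> : (y - q - b) * (y + b) = y ^+ 2 - (b ^+ 2 + q * y + q * b) by ring.
  by rewrite subr_le0.
have [->|yp] := eqVneq y 0; first by rewrite addr_ge0.
have yb : 0 < y + b by rewrite ltr_wpDr // lt_def yp.
nra.
Qed.


Lemma e6gen (R : realType) (g al n V b : R) : 1 - g != 0 -> n != 0 ->
  (1 - g) * (V + n^-1 + ((al / (1 - g)) ^+ 2 / n + b)) =
  (1 - g) * V + (1 - g) / n + al ^+ 2 / ((1 - g) * n) + (1 - g) * b.
Proof. by move=> h1 h2; field; rewrite h1 h2. Qed.

Theorem lemma9 (R : realType) (S A : finType)
  (P : S -> A -> S -> R) (r : S -> A -> R) (delta : R)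
  (Phat : nat -> S -> A -> S -> R)
  (pistar : R -> S -> A -> R)
  (pitil : nat -> R -> S -> A -> R)
  (Vtil : nat -> R -> S -> R) :
  is_kernel P -> weakly_communicating P ->
  (forall s a, 0 <= r s a <= 1) ->
  0 < delta < 1 ->
  (forall i, is_kernel (Phat i)) ->
  (forall i g, (1 <= i)%N -> Hset i g ->
     is_stat_policy (pistar g) /\
     (forall s, Vpi P r g (stat (pistar g)) s = Vstar P r g s)) ->
  (forall i g, (1 <= i)%N -> Hset i g -> is_stat_policy (pitil i g)) ->
  (forall i g, (1 <= i)%N -> Hset i g ->
    let n : R := 2 ^+ i in
    let al := alpha #|S| #|A| delta n in
    let Vs := Vpi P r g (stat (pistar g)) in
    let Vhs := Vpi (Phat i) r g (stat (pistar g)) in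
    let Vht := Vpi (Phat i) r g (stat (pitil i g)) in
    let Vt := Vpi P r g (stat (pitil i g)) in
    let Vhstar := Vstar (Phat i) r g in
    [/\ supnorm (fun s => Vs s - Vhs s)
          <= al / (1 - g) * Num.sqrt ((spnorm Vs + 1) / n),
        (forall s, Vhstar s - n^-1 <= Vht s),
        supnorm (fun s => Vtil i g s - Vhstar s) <= n^-1 &
        supnorm (fun s => Vht s - Vt s)
          <= al / (1 - g) * Num.sqrt ((spnorm Vht + 1) / n)]) ->
  forall i g, (1 <= i)%N -> Hset i g ->
    let n : R := 2 ^+ i in
    let al := alpha #|S| #|A| delta n in
    let Vt := Vtil i g in
    let Uhat := (1 - g) * vmax Vt + 5 * (1 - g) / n + 2 * al ^+ 2 / ((1 - g) * n)
                + 4 * al * Num.sqrt ((spnorm Vt + 1 + 3 / n) / n) in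
    let Lhat := (1 - g) * vmin Vt - 2 * (1 - g) / n
                - al * Num.sqrt ((spnorm Vt + 3 / n + 1) / n) in
    forall s,
      [/\ Lhat <= gain P r (stat (pitil i g)) s,
          gain P r (stat (pitil i g)) s <= rhostar P r s &
          rhostar P r s <= Uhat].
Proof.
move=> hP _ hr hdelta hPh hstar htil H i g hi hH n al Vt Uhat Lhat s.
have [g0 g1] : 0 <= g /\ g < 1.
  case: hH => k [hk _].
  have pk : (0:R) < 2 ^+ k by rewrite exprn_gt0.
  have e : 1 - g = (2 ^+ k)^-1 by rewrite -hk invrK.
  have h1 : 0 < 1 - g by rewrite e invr_gt0.
  have h2 : 1 - g <= 1 by rewrite e invf_le1 // exprn_ege1 // ler1n.
  split; lra.
have hg : 0 <= g < 1 by rewrite g0 g1.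
have hg1 : 0 <= g <= 1 by rewrite g0 ltW.
have n0 : 0 < n by rewrite exprn_gt0.
have al0 : 0 <= al.
  rewrite /al /alpha /log2; apply: mulr_ge0; first by rewrite mulr_ge0 ?sqrtr_ge0.
  have l2 : (0 : R) < ln 2 by rewrite ln_gt0 // ltr1n.
  apply: divr_ge0; last exact: ltW.
  apply: ln_ge0; rewrite ler_pdivlMr // mul1r ler_ln ?posrE //; lra.
have [hps hVs] := hstar i g hi hH.
have hpt := htil i g hi hH.
have [h1 h2 h3 h4] := H i g hi hH.

rewrite -/n -/al in h1 h2 h3 h4.
set Vs := Vpi P r g (stat (pistar g)) in hVs h1 *.
set Vhs := Vpi (Phat i) r g (stat (pistar g)) in h1.
set Vht := Vpi (Phat i) r g (stat (pitil i g)) in h2 h4 *.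
set Vtt := Vpi P r g (stat (pitil i g)) in h4 *.
set Vhstar := Vstar (Phat i) r g in h2 h3.
rewrite -/Vt in h3.
have hpols := stat_policy hps.
have hpolt := stat_policy hpt.
set c := al / (1 - g) in h1 h4.
have c0 : 0 <= c by rewrite divr_ge0 // subr_ge0 ltW.
set e1 := c * _ in h1.
set e2 := c * _ in h4.
have F1 t : `|Vs t - Vhs t| <= e1 by exact: (supnorm_abs t h1).
have F3 t : `|Vt t - Vhstar t| <= n^-1 by exact: (supnorm_abs t h3).
have F4 t : `|Vht t - Vtt t| <= e2 by exact: (supnorm_abs t h4).
have F5 t : Vht t <= Vhstar t by apply: (Vstar_ge (hPh i) hr).
have F6 t : Vhs t <= Vhstar t by apply: (Vstar_ge (hPh i) hr).
have F7 t : Vtt t <= Vs t by rewrite hVs; apply: (Vstar_ge hP hr).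
have Fdev t a : r t a + g * \sum_(s' : S) P t a s' * Vs s' <= Vs t.
  by rewrite [X in _ <= X]hVs; apply: (Vstar_dev hP hr).
have Fbell t : Vtt t = \sum_(a : A) pitil i g t a * (r t a + g * \sum_(s' : S) P t a s' * Vtt s').
  by apply: (Vpi_stat_eq hP hr).
have Fr (x : S -> R) (t : S) : vmin x <= x t <= vmax x by rewrite vmin_le vmax_ge.
have sp0 (x : S -> R) : 0 <= spnorm x by rewrite /spnorm subr_ge0 (le_trans (vmin_le x s) (vmax_ge x s)).
have gup (pi : policy R S A) : is_policy pi -> gain P r pi s <= (1 - g) * vmax Vs.
  by move=> hpi; apply: (gain_upper hP hr (m := vmin Vs)).
have glo : (1 - g) * vmin Vtt <= gain P r (stat (pitil i g)) s.
  by apply: (gain_lower hP hr (M := vmax Vtt)).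
have rho1 : gain P r (stat (pitil i g)) s <= rhostar P r s.
  apply: ub_le_sup; last by exists (stat (pitil i g)).
  by exists ((1 - g) * vmax Vs) => _ [pi hpi <-]; apply: gup.
have rho2 : rhostar P r s <= (1 - g) * vmax Vs.
  apply: ge_sup; first by exists (gain P r (stat (pitil i g)) s), (stat (pitil i g)).
  by move=> _ [pi hpi <-]; apply: gup.
have Lt t : vmin Vt - 2 / n - e2 <= Vtt t.
  have := F4 t; have := F3 t; have := h2 t; have := Fr Vt t.
  rewrite !ler_norml; lra.
have Ls t : vmin Vt - 2 / n - e2 <= Vs t by apply: le_trans (Lt t) (F7 t).
have Us t : Vs t <= vmax Vt + n^-1 + e1.
  have := F1 t; have := F6 t; have := F3 t; have := Fr Vt t.
  rewrite !ler_norml; lra.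
have Uht t : Vht t <= vmax Vt + n^-1.
  have := F5 t; have := F3 t; have := Fr Vt t; rewrite !ler_norml; lra.
have Lht t : vmin Vt - 2 / n <= Vht t.
  have := h2 t; have := F3 t; have := Fr Vt t; rewrite !ler_norml; lra.
have mVtt := vmin_ge s Lt.
have mVs := vmin_ge s Ls.
have MVs := vmax_le s Us.
have mVht := vmin_ge s Lht.
have MVht := vmax_le s Uht.
set X := spnorm Vt + 1 + 3 / n.
have X0 : 0 <= X.
  apply: addr_ge0; first by apply: addr_ge0; [exact: sp0 | exact: ler01].
  by apply: divr_ge0; [exact: ler0n | exact: ltW].
have ni0 : 0 <= n^-1 by rewrite invr_ge0 ltW.
have sq_mono a b : a <= b -> 0 <= b -> Num.sqrt (a / n) <= Num.sqrt (b / n).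
  move=> ab b0; rewrite ler_sqrt ?mulr_ge0 //; exact: ler_wpM2r.
set b := c * Num.sqrt (X / n).
have e2b : e2 <= b.
  rewrite /e2 /b; apply: ler_wpM2l => //; apply: sq_mono => //.
  rewrite /X /spnorm; have : 3 / n = 3 * n^-1 by [].
  have : 2 / n = 2 * n^-1 by []. lra.

have g1' : 0 < 1 - g by rewrite subr_gt0.
have gne : 1 - g != 0 by rewrite gt_eqF.
have nne : n != 0 by rewrite gt_eqF.
set sX := Num.sqrt (X / n).
have sX0 : 0 <= sX by rewrite sqrtr_ge0.
have cb : (1 - g) * b = al * sX.
  rewrite /b /c mulrA [_ * (al / _)]mulrCA divff // mulr1. by [].
have q0 : 0 <= c ^+ 2 / n by rewrite divr_ge0 ?sqr_ge0 // ltW.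
have e10 : 0 <= e1 by rewrite mulr_ge0 ?sqrtr_ge0.
have b0 : 0 <= b by rewrite mulr_ge0.
have key : e1 <= c ^+ 2 / n + b.
  apply: (@key_ineq _ _ _ _ (spnorm Vs + 1) X) => //.
  - move=> Z0; rewrite /e1 exprMn sqr_sqrtr ?mulr_ge0 //; field => //.
  - rewrite /b exprMn sqr_sqrtr ?mulr_ge0 //; field => //.
  - move=> Zn; rewrite /e1 ler0_sqrtr ?mulr0 //.
    by apply: mulr_le0_ge0 => //; exact: ltW.
  - rewrite /X /spnorm; lra.
split.
- rewrite /Lhat.
  have eX : spnorm Vt + 3 / n + 1 = X by rewrite /X; ring.
  rewrite eX -/sX.
  have h5 : (1 - g) * (vmin Vt - 2 / n - e2) <= (1 - g) * vmin Vtt by apply: ler_wpM2l => //; exact: ltW.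
  have h6 : (1 - g) * e2 <= (1 - g) * b by apply: ler_wpM2l => //; exact: ltW.
  have e7 : (1 - g) * (vmin Vt - 2 / n - e2) = (1 - g) * vmin Vt - 2 * (1 - g) / n - (1 - g) * e2 by ring.
  lra.
- exact: rho1.
- rewrite /Uhat -/X -/sX.
  have h5 : (1 - g) * vmax Vs <= (1 - g) * (vmax Vt + n^-1 + (c ^+ 2 / n + b)).
    apply: ler_wpM2l; first exact: ltW.
    lra.
  have e6 : (1 - g) * (vmax Vt + n^-1 + (c ^+ 2 / n + b)) =
     (1 - g) * vmax Vt + (1 - g) / n + al ^+ 2 / ((1 - g) * n) + (1 - g) * b.
    by rewrite /c; apply: e6gen.
  have h7 : 0 <= al ^+ 2 / ((1 - g) * n) by rewrite divr_ge0 ?sqr_ge0 // mulr_ge0 // ltW.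
  have h8 : 0 <= (1 - g) / n by rewrite divr_ge0 // ltW.
  have h9 : 0 <= al * sX by rewrite mulr_ge0.
  have e10' : 5 * (1 - g) / n = 5 * ((1 - g) / n) by ring.
  have e11 : 2 * al ^+ 2 / ((1 - g) * n) = 2 * (al ^+ 2 / ((1 - g) * n)) by ring.
  have e12 : 4 * al * sX = 4 * (al * sX) by ring.
  lra.
Qed.
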